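(* Let $k\ge2$ be an integer and $n\ge1$ a natural number. Then $(L_k^{(1)})^n=L_k^{(n)}\,(L_k^{(0)})^{n-1}$.
   Context: Fix an integer $k\ge2$. Let $Q_k$ be the $k\times k$ matrix whose first row is all ones, with $(Q_k)_{i+1,i}=1$ for $1\le i\le k-1$ and all other entries $0$, and for $r\in\mathbb Z$ let $Q_k^r$ denote its $r$-th power. The generalized Lucas sequence of order $k$, $(l_{k,n})_{n\in\mathbb Z}$, is the two-sided sequence satisfying $l_{k,n+k}=l_{k,n+k-1}+\dots+l_{k,n}$ for all $n\in\mathbb Z$ with initial values $l_{k,r}=\operatorname{trace}(Q_k^r)$ for $0\le r\le k-1$ (so $l_{k,0}=k$ and $l_{k,r}=2^r-1$ for $1\le r\le k-1$). For $n\in\mathbb Z$ the generalized Lucas matrix $L_k^{(n)}$ is the $k\times k$ matrix with entries $(L_k^{(n)})_{i,1}=l_{k,k+n-i}$ and $(L_k^{(n)})_{i,j}=\sum_{m=n-i+j-1}^{k+n-i-1} l_{k,m}$ for $2\le j\le k$, $1\le i\le k$. *)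

(* Defs.v *)
From mathcomp Require Import all_boot all_order all_algebra.
Set Implicit Arguments. Unset Strict Implicit. Unset Printing Implicit Defensive.
Import Order.TTheory GRing.Theory Num.Theory.
Local Open Scope ring_scope.

Definition Qmat (k : nat) : 'M[int]_k :=
  \matrix_(i < k, j < k) (if (i : nat) == 0%N then 1 else if (i : nat) == j.+1 then 1 else 0).

Definition luc_init (k : nat) : seq int := [seq \tr (Qmat k ^+ r) | r <- iota 0 k].

(* windows w = [l_m; ...; l_{m+k-1}] of k consecutive terms *)
Definition luc_fwd (w : seq int) : seq int := rcons (behead w) (\sum_(x <- w) x).
(* backward step: [l_m..l_{m+k-1}] -> [l_{m-1}..l_{m+k-2}],
   with l_{m-1} = l_{m+k-1} - (l_m + ... + l_{m+k-2}) *)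
Definition luc_bwd (w : seq int) : seq int :=
  let w' := take (size w).-1 w in (last 0 w - \sum_(x <- w') x) :: w'.

Definition luc (k : nat) (n : int) : int :=
  match n with
  | Posz m => head 0 (iter m luc_fwd (luc_init k))
  | Negz m => head 0 (iter m.+1 luc_bwd (luc_init k))
  end.

(* generalized Lucas matrix L_k^{(n)}; with 0-based i, j (paper: i+1, j+1):
   column 1: l_{k,k+n-(i+1)};
   column j+1 >= 2: sum_{m = n-(i+1)+(j+1)-1}^{k+n-(i+1)-1} l_{k,m}  (k - j terms) *)
Definition lucmx (k : nat) (n : int) : 'M[int]_k :=
  \matrix_(i < k, j < k)
    (if (j : nat) == 0%N then luc k (k%:Z + n - (i.+1)%:Z)
     else \sum_(t < k - j) luc k (n - i%:Z + j%:Z - 1 + t%:Z)).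

(* Main.v *)
Require Import Defs.
From mathcomp Require Import all_boot all_order all_algebra.
From mathcomp Require Import zify ring.
Set Implicit Arguments. Unset Strict Implicit. Unset Printing Implicit Defensive.
Import Order.TTheory GRing.Theory Num.Theory.
Local Open Scope ring_scope.

Lemma size_fwd (w : seq int) : (0 < size w)%N -> size (luc_fwd w) = size w.
Proof. by case: w => //= x w _; rewrite size_rcons. Qed.

Lemma size_bwd (w : seq int) : (0 < size w)%N -> size (luc_bwd w) = size w.
Proof. move=> h; rewrite /luc_bwd /= size_take; case: (size w) h => //= n _; by rewrite ltnSn. Qed.

Lemma fwd_bwd (w : seq int) : (0 < size w)%N -> luc_fwd (luc_bwd w) = w.
Proof.
case/lastP: w => [//|s x] _.
rewrite /luc_fwd /luc_bwd /= size_rcons /=.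
have -> : take (size s) (rcons s x) = s by rewrite -cats1 take_size_cat.
by rewrite big_cons subrK last_rcons.
Qed.

Lemma nth_fwd (w : seq int) i : (i.+1 < size w)%N -> nth 0 (luc_fwd w) i = nth 0 w i.+1.
Proof.
move=> h; rewrite /luc_fwd nth_rcons size_behead.
have -> : (i < (size w).-1)%N by lia.
by rewrite nth_behead.
Qed.

Lemma nth_fwd_last (w : seq int) : (0 < size w)%N ->
  nth 0 (luc_fwd w) (size w).-1 = \sum_(x <- w) x.
Proof.
move=> h; rewrite /luc_fwd nth_rcons size_behead ltnn eqxx //.
Qed.

Section K.
Variable k : nat.
Hypothesis hk : (2 <= k)%N.

Definition win (a : int) : seq int :=
  match a with
  | Posz m => iter m luc_fwd (luc_init k)
  | Negz m => iter m.+1 luc_bwd (luc_init k)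
  end.

Lemma lucE a : luc k a = head 0 (win a).
Proof. by case: a. Qed.

Lemma size_init : size (luc_init k) = k.
Proof. by rewrite /luc_init size_map size_iota. Qed.

Lemma size_win a : size (win a) = k.
Proof.
case: a => m; rewrite /win; [move: m | move: m.+1] => {}m.
  elim: m => [|m IH]; first exact: size_init.
  by rewrite iterS size_fwd IH //; lia.
elim: m => [|m IH]; first exact: size_init.
by rewrite iterS size_bwd IH //; lia.
Qed.

Lemma win_succ a : win (a + 1) = luc_fwd (win a).
Proof.
case: a => m.
  have -> : Posz m + 1 = Posz m.+1 by rewrite -PoszD addn1.
  by [].
case: m => [|m].
  by rewrite /= fwd_bwd // size_init; lia.
have -> : Negz m.+1 + 1 = Negz m by rewrite !NegzE; lia.
rewrite /= fwd_bwd //; try (have := size_win (Negz m) => /= ->; lia).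
Qed.

Lemma nth_win i a : (i < k)%N -> nth 0 (win a) i = luc k (a + i%:Z).
Proof.
elim: i a => [|i IH] a hi.
  by rewrite addr0 lucE; case: (win a).
rewrite -nth_fwd ?size_win // -win_succ IH; last lia.
congr (luc k _); lia.
Qed.

Lemma luc_rec a : luc k (a + k%:Z) = \sum_(u < k) luc k (a + u%:Z).
Proof.
have -> : a + k%:Z = (a + 1) + (k.-1)%N%:Z by lia.
rewrite -nth_win; last lia.
rewrite win_succ -(size_win a) nth_fwd_last; last by rewrite size_win; lia.
rewrite (big_nth 0) big_mkord size_win.
by apply: eq_bigr => u _; rewrite nth_win.
Qed.

Lemma sum_back b : \sum_(i < k) luc k (b - i%:Z) = luc k (b + 1).
Proof.
rewrite (reindex_inj rev_ord_inj) /=.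
have -> : b + 1 = (b + 1 - k%:Z) + k%:Z by ring.
rewrite luc_rec; apply: eq_bigr => i _; congr (luc k _).
have := ltn_ord i; lia.
Qed.
End K.

Definition lm k (m : int) (i j : nat) : int :=
  if j == 0%N then luc k (k%:Z + m - (i.+1)%:Z)
  else \sum_(t < k - j) luc k (m - i%:Z + j%:Z - 1 + t%:Z).

Lemma lucmxE k m (i j : 'I_k) : lucmx k m i j = lm k m i j.
Proof. by rewrite mxE. Qed.

Lemma QE k (i j : 'I_k) : Qmat k i j = if (i:nat) == 0%N then 1 else if (i:nat) == j.+1 then 1 else 0.
Proof. by rewrite mxE. Qed.

Lemma sum_delta n j (G : nat -> int) :
  \sum_(r < n) (if (r:nat) == j then G r else 0) = if (j < n)%N then G j else 0.
Proof.
elim: n => [|n IH]; first by rewrite big_ord0.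
rewrite big_ord_recr /= IH.
case: eqP => e; case: ifP => h1; case: ifP => h2; rewrite ?addr0 ?add0r //; try lia.
by subst j.
Qed.

Lemma ifmul (b : bool) (x : int) : (if b then 1 else 0) * x = if b then x else 0.
Proof. by case: b; rewrite ?mul1r ?mul0r. Qed.
Lemma mulif (b : bool) (x : int) : x * (if b then 1 else 0) = if b then x else 0.
Proof. by case: b; rewrite ?mulr1 ?mulr0. Qed.

Lemma QL k (hk : (2 <= k)%N) m : lucmx k (m+1) = Qmat k *m lucmx k m.
Proof.
apply/matrixP => i j; rewrite !mxE.
have -> : \sum_r Qmat k i r * lucmx k m r j = \sum_(r < k) (if (i:nat)==0%N then 1 else if (i:nat) == r.+1 then 1 else 0) * lm k m r j.
  by apply: eq_bigr => r _; rewrite QE lucmxE.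
case: i => [[|i] hi] /=.
- rewrite [RHS](eq_bigr (fun r : 'I_k => lm k m r j)); last by move=> r _; rewrite mul1r.
  rewrite /lm; case: eqP => hj.
  + have := sum_back hk (k%:Z + m - 1).
    move=> h; rewrite (_ : k%:Z + (m + 1) - 1 = k%:Z + m - 1 + 1); last by ring.
    rewrite -h; apply: eq_bigr => r _; congr (luc k _); lia.
  + rewrite exchange_big /=; apply: eq_bigr => t _.
    rewrite (_ : m + 1 - 0 + j%:Z - 1 + t%:Z = (m + j%:Z - 1 + t%:Z) + 1); last by ring.
    rewrite -sum_back //; apply: eq_bigr => r _; congr (luc k _); lia.
- rewrite [RHS](eq_bigr (fun r : 'I_k => if (r:nat) == i then lm k m r j else 0)); last by move=> r _; rewrite eqSS ifmul eq_sym.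
  rewrite (@sum_delta _ _ (fun r => lm k m r j)) (ltnW hi).
  rewrite /lm; case: eqP => hj.
  + congr (luc k _); lia.
  + apply: eq_bigr => t _; congr (luc k _); lia.
Qed.

Lemma LQ k (hk : (2 <= k)%N) m : lucmx k (m+1) = lucmx k m *m Qmat k.
Proof.
apply/matrixP => i j; rewrite !mxE.
have -> : \sum_r lucmx k m i r * Qmat k r j = \sum_(r < k) lm k m i r * (if (r:nat)==0%N then 1 else if (r:nat) == j.+1 then 1 else 0).
  by apply: eq_bigr => r _; rewrite QE lucmxE.
case: k hk i j => [|[|k]] // hk i j.
rewrite big_ord_recl /= mulr1.
rewrite [X in _ = _ + X](eq_bigr (fun r : 'I_k.+1 => if (r:nat) == j then lm k.+2 m i r.+1 else 0)); last by move=> r _; rewrite /bump leq0n add1n eqSS mulif.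
rewrite (@sum_delta _ _ (fun r => lm k.+2 m i r.+1)).
have -> : (if (j < k.+1)%N then lm k.+2 m i j.+1 else 0) = lm k.+2 m i j.+1.
  case: ifP => // hj; rewrite /lm /=.
  have -> : (k.+2 - j.+1 = 0)%N by have := ltn_ord j; lia.
  by rewrite big_ord0.
rewrite /lm /=; case: eqP => hj.
- rewrite hj /= subSS subn0.
  have -> : k.+2%:Z + (m + 1) - (i.+1)%:Z = (m - i%:Z) + k.+2%:Z by ring.
  rewrite luc_rec // big_ord_recr /= addrC; congr (_ + _).
  + congr (luc k.+2 _); lia.
  + apply: eq_bigr => t _; congr (luc k.+2 _); lia.
- have hjk := ltn_ord j.
  case: (nat_of_ord j) hj hjk => [//|j'] _ hjk.
  have -> : (k.+2 - j'.+1 = (k - j').+1)%N by lia.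
  have -> : (k.+2 - j'.+2 = (k - j'))%N by lia.
  rewrite big_ord_recr /= addrC; congr (_ + _).
  + congr (luc k.+2 _); lia.
  + apply: eq_bigr => t _; congr (luc k.+2 _); lia.
Qed.

Theorem theorem3 (k n : nat) (hk : (2 <= k)%N) (hn : (1 <= n)%N) :
  (lucmx k 1) ^+ n = lucmx k n%:Z *m (lucmx k 0) ^+ n.-1.
Proof.
set Q := Qmat k; set L0 := lucmx k 0.
have h1 : lucmx k 1 = Q * L0 by rewrite -[1]add0r QL.
have h1' : lucmx k 1 = L0 * Q by rewrite -[1]add0r LQ.
have hc : GRing.comm Q L0 by rewrite /GRing.comm -h1 -h1'.
have hn' : forall p : nat, lucmx k p%:Z = Q ^+ p * L0.
  elim=> [|p IH]; first by rewrite expr0 mul1r.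
  have -> : Posz p.+1 = Posz p + 1 by rewrite -addn1 PoszD.
  by rewrite QL // IH exprS -mulmxE mulmxA.
case: n hn => [//|n] _ /=.
by rewrite h1 exprMn_comm // hn' exprSr exprS mulrA -mulmxE.
Qed.
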